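(* Let $V$ be a real vector space with a symplectic form $\sigma$, let $\mathcal{L}(V)$ be the lattice of all linear subspaces of $V$ with symplectic complementation, and let $\mu:\mathcal{L}(V)\to[0,1]$ be a finitely additive probability measure. Let $H\in\mathcal{L}(V)$. (a) For every decomposition $H=Z(H)\oplus_\sigma K$, where $Z(H)=H\cap H'$ and $K\subset H$ is a subspace with $Z(H)\subset K'$ and $Z(H)\cap K=\{0\}$, one has $\mu(H)=\mu(K)$. (b) If $H$ is symplectic and $H=H_1\oplus_\sigma\cdots\oplus_\sigma H_n$ with symplectic planes $H_k$ satisfying $H_i\subset H_j'$ for $i\ne j$, then $\mu(H)=\sum_{k=1}^n\mu(H_k)$.
   Context: A symplectic form is a bilinear, antisymmetric, non-degenerate map $\sigma:V\times V\to\mathbb{R}$. For a subspace $H$, $H'=\{v\in V:\sigma(v,h)=0\ \forall h\in H\}$. $\mathcal{L}(V)$ is ordered by inclusion, with $H\vee K=H+K$ (no closure), $H\wedge K=H\cap K$, $0=\{0\}$, $1=V$. $H,K$ are separated if $H\subset K'$. $\oplus_\sigma$ denotes an algebraic direct sum of mutually separated subspaces. $H$ is symplectic if $H\cap H'=\{0\}$; a symplectic plane is a two-dimensional symplectic subspace. A finitely additive probability measure on $\mathcal{L}(V)$ is a map $\mu$ into $[0,1]$ with $\mu(\{0\})=0$, $\mu(V)=1$, monotone ($H\subset K\Rightarrow\mu(H)\le\mu(K)$), and $\mu(H_1+\dots+H_n)=\sum_k\mu(H_k)$ whenever $H_1,\dots,H_n$ are pairwise separated. *)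

(* Defs.v *)
From HB Require Import structures.
From mathcomp Require Import all_boot all_order all_algebra.
From mathcomp Require Import boolp classical_sets reals.
Set Implicit Arguments. Unset Strict Implicit. Unset Printing Implicit Defensive.
Import Order.TTheory GRing.Theory Num.Theory.
Local Open Scope ring_scope.
Local Open Scope classical_set_scope.

Section Symplectic.
Variables (R : realType) (V : lmodType R).

Definition symplectic_form (sigma : V -> V -> R) : Prop :=
  [/\ (forall (a : R) (u v w : V), sigma (a *: u + v) w = a * sigma u w + sigma v w),
      (forall (a : R) (u v w : V), sigma u (a *: v + w) = a * sigma u v + sigma u w),
      (forall u v : V, sigma u v = - sigma v u)
    & (forall v : V, (forall w : V, sigma v w = 0) -> v = 0)].

Definition subspace (H : set V) : Prop :=
  [/\ H 0, (forall u v, H u -> H v -> H (u + v))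
    & (forall (a : R) u, H u -> H (a *: u))].

Definition scompl (sigma : V -> V -> R) (H : set V) : set V :=
  [set v | forall h, H h -> sigma v h = 0].

Definition ssum (H K : set V) : set V :=
  [set v | exists h k, [/\ H h, K k & v = h + k]].

Definition bigssum (n : nat) (Hs : 'I_n -> set V) : set V :=
  [set v | exists f : 'I_n -> V, (forall k, Hs k (f k)) /\ v = \sum_(k < n) f k].

Definition separated (sigma : V -> V -> R) (H K : set V) : Prop :=
  H `<=` scompl sigma K.

Definition symplectic_subspace (sigma : V -> V -> R) (H : set V) : Prop :=
  subspace H /\ H `&` scompl sigma H = [set 0].

Definition dim2 (H : set V) : Prop :=
  exists u v : V,
    (forall a b : R, a *: u + b *: v = 0 -> a = 0 /\ b = 0) /\
    H = [set w | exists a b : R, w = a *: u + b *: v].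

Definition symplectic_plane (sigma : V -> V -> R) (H : set V) : Prop :=
  symplectic_subspace sigma H /\ dim2 H.

(* finitely additive probability measure on L(V) (values outside L(V) are irrelevant) *)
Definition fa_prob_measure (sigma : V -> V -> R) (mu : set V -> R) : Prop :=
  [/\ (forall H, subspace H -> 0 <= mu H <= 1),
      mu [set 0] = 0,
      mu setT = 1,
      (forall H K, subspace H -> subspace K -> H `<=` K -> mu H <= mu K)
    & (forall (n : nat) (Hs : 'I_n -> set V),
         (forall k, subspace (Hs k)) ->
         (forall i j, i != j -> separated sigma (Hs i) (Hs j)) ->
         mu (bigssum Hs) = \sum_(k < n) mu (Hs k))].

End Symplectic.

(* Main.v *)
Require Import Defs.
From HB Require Import structures.
From mathcomp Require Import all_boot all_order all_algebra.
From mathcomp Require Import boolp classical_sets reals.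
Import Order.TTheory GRing.Theory Num.Theory.
Local Open Scope ring_scope.
Local Open Scope classical_set_scope.

Lemma sum2 (R : realType) (V : lmodType R) (f : 'I_2 -> V) :
  \sum_(k < 2) f k = f ord0 + f (@Ordinal 2 1 isT).
Proof.
rewrite !big_ord_recr big_ord0 /= add0r; congr (_ + _); congr f; exact: val_inj.
Qed.

Lemma sum2R (R : realType) (f : 'I_2 -> R) :
  \sum_(k < 2) f k = f ord0 + f (@Ordinal 2 1 isT).
Proof.
rewrite !big_ord_recr big_ord0 /= add0r; congr (_ + _); congr f; exact: val_inj.
Qed.

Lemma mu2 (R : realType) (V : lmodType R) (sigma : V -> V -> R)
  (mu : set V -> R) (hmu : fa_prob_measure sigma mu) (A B : set V) :
  subspace A -> subspace B -> A `<=` scompl sigma B -> B `<=` scompl sigma A ->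
  mu (ssum A B) = mu A + mu B.
Proof.
move=> sA sB AB BA.
case: hmu => _ _ _ _ hadd.
pose Hs := fun i : 'I_2 => if val i == 0%N then A else B.
have E : ssum A B = bigssum Hs.
  apply/seteqP; split => x /=.
  - move=> [h [k [Ah Bk ->]]].
    exists (fun i : 'I_2 => if val i == 0%N then h else k); split.
      by move=> i; rewrite /Hs; case: (val i == 0%N).
    by rewrite sum2.
  - move=> [f [Hf ->]]; exists (f ord0), (f (@Ordinal 2 1 isT)); split => //.
      exact: (Hf ord0).
    exact: (Hf (@Ordinal 2 1 isT)).
    by rewrite sum2.
rewrite E hadd.
  by rewrite sum2R.
  by move=> k; rewrite /Hs; case: (val k == 0%N).
move=> [[|[|i]] Hi] [[|[|j]] Hj] //= _; rewrite /separated /Hs //=.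
Qed.

Lemma sigma0 (R : realType) (V : lmodType R) (sigma : V -> V -> R)
  (hsigma : symplectic_form sigma) (w : V) : sigma 0 w = 0.
Proof.
case: hsigma => l _ _ _.
have := l 1 0 0 w; rewrite scale1r addr0 mul1r.
by move/(congr1 (fun x => x - sigma 0 w)); rewrite subrr addrK.
Qed.

Theorem lemmaB1 (R : realType) (V : lmodType R) (sigma : V -> V -> R)
  (hsigma : symplectic_form sigma) (mu : set V -> R)
  (hmu : fa_prob_measure sigma mu) (H : set V) (hH : subspace H) :
  (* (a) *)
  (forall K : set V,
     subspace K -> K `<=` H ->
     H `&` scompl sigma H `<=` scompl sigma K ->
     (H `&` scompl sigma H) `&` K = [set 0] ->
     H = ssum (H `&` scompl sigma H) K ->
     mu H = mu K) /\
  (* (b) *)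
  (symplectic_subspace sigma H ->
   forall (n : nat) (Hs : 'I_n -> set V),
     (forall k, symplectic_plane sigma (Hs k)) ->
     (forall i j, i != j -> Hs i `<=` scompl sigma (Hs j)) ->
     H = bigssum Hs ->
     mu H = \sum_(k < n) mu (Hs k)).
Proof.
split.
  move=> K sK KH ZK _ EH.
  set Z := H `&` scompl sigma H in ZK EH *.
  have [l _ asym _] := hsigma.
  case: (hH) => H0 HD HZ.
  have sZ : subspace Z.
    split.
    - split => // h _; exact: sigma0.
    - move=> u v [Hu Cu] [Hv Cv]; split; first exact: HD.
      move=> h Hh; have := l 1 u v h; rewrite scale1r mul1r => ->.
      by rewrite Cu // Cv // addr0.
    - move=> a u [Hu Cu]; split; first exact: HZ.
      move=> h Hh; have := l a u 0 h; rewrite addr0 => ->.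
      by rewrite Cu // sigma0 // mulr0 addr0.
  have KZ : K `<=` scompl sigma Z.
    move=> k Kk z Zz; rewrite asym (ZK z Zz k Kk); exact: oppr0.
  have ZZ : Z `<=` scompl sigma Z.
    by move=> z [_ Cz] z' [Hz' _]; exact: Cz.
  have EZ : ssum Z Z = Z.
    apply/seteqP; split => x /=.
    - by move=> [h [k [Zh Zk ->]]]; case: sZ => _ D _; exact: D.
    - move=> Zx; exists x, 0; split => //; first by case: sZ.
      by rewrite addr0.
  have hZ := (@mu2 _ _ _ _ hmu _ _) sZ sZ ZZ ZZ.
  rewrite EZ in hZ.
  have mZ : mu Z = 0.
    by move/eqP: hZ; rewrite -subr_eq0 opprD addrA subrr sub0r oppr_eq0 => /eqP.
  by rewrite EH ((@mu2 _ _ _ _ hmu _ _) sZ sK ZK KZ) mZ add0r.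
move=> _ n Hs HP Hsep ->.
case: hmu => _ _ _ _ hadd; apply: hadd.
  by move=> k; case: (HP k) => [[]].
exact: Hsep.
Qed.
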